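(* Let $E$ be a separable real Hilbert space, let $0<p<\infty$ be such that $p$ is not an even integer, and let $k=\lceil p/2\rceil$. Then for every $x\in E$, $$\lim_{h\to 0}\frac{\sum_{j=0}^{2k}\binom{2k}{j}(-1)^j\|x+(k-j)h\|^p}{\Big(\sum_{j=0}^{2k}\binom{2k}{j}(-1)^j|k-j|^p\Big)\|h\|^p}=\chi_{\{0\}}(x),$$ where the limit is taken over $h\in E\setminus\{0\}$, $h\to 0$, and $\chi_{\{0\}}$ is the indicator function of $\{0\}$ (equal to $1$ at $x=0$ and $0$ otherwise). *)

(* Defs.v *)
From HB Require Import structures.
From mathcomp Require Import all_boot all_order all_algebra.
From mathcomp Require Import all_classical all_reals all_analysis.
Set Implicit Arguments. Unset Strict Implicit. Unset Printing Implicit Defensive.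
Import Order.TTheory GRing.Theory Num.Theory.
Import numFieldNormedType.Exports.
Local Open Scope classical_set_scope.
Local Open Scope ring_scope.

(* A real inner product on E whose induced norm is the norm of E:
   symmetric, bilinear (linearity in the first argument + symmetry),
   and ||x||^2 = <x,x> (which also gives positive definiteness). *)
Definition is_inner_product (R : realType) (E : normedModType R)
  (inner : E -> E -> R) : Prop :=
  [/\ (forall x y, inner x y = inner y x),
      (forall a x y z, inner (a *: x + y) z = a * inner x z + inner y z)
    & (forall x, `|x| ^+ 2 = inner x x)].

Definition hilbert_space (R : realType) (E : completeNormedModType R) : Prop :=
  exists inner : E -> E -> R, is_inner_product inner.

Definition separable_space (T : topologicalType) : Prop :=
  exists S : set T, countable S /\ dense S.

Definition kceil (R : realType) (p : R) : nat := `|Num.ceil (p / 2)|%N.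

Definition fdiff_num (R : realType) (E : normedModType R) (k : nat) (p : R)
  (x h : E) : R :=
  \sum_(j < (2 * k).+1)
     ('C(2 * k, j))%:R * (-1) ^+ j * (`|x + (k%:R - j%:R) *: h| `^ p).

Definition fdiff_const (R : realType) (k : nat) (p : R) : R :=
  \sum_(j < (2 * k).+1)
     ('C(2 * k, j))%:R * (-1) ^+ j * (`|k%:R - j%:R| `^ p).

(* Main.v *)
Require Import Defs.
From HB Require Import structures.
From mathcomp Require Import all_boot all_order all_algebra.
From mathcomp Require Import all_classical all_reals all_analysis.
From mathcomp Require Import ring lra zify.
From Stdlib Require Import Lia.
Import Order.TTheory GRing.Theory Num.Theory.
Import numFieldNormedType.Exports.
Local Open Scope classical_set_scope.
Local Open Scope ring_scope.



Section Aux.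
Variable R : realType.
Lemma alt_binS (n : nat) (f : nat -> R) :
  \sum_(j < n.+2) ('C(n.+1, j))%:R * (-1) ^+ j * f j =
  \sum_(j < n.+1) ('C(n, j))%:R * (-1) ^+ j * (f j - f j.+1).
Proof.
rewrite big_ord_recl /= bin0.
under eq_bigr => j _ do rewrite /bump /= add1n binS natrD mulrDl mulrDl.
rewrite big_split /=.
rewrite [X in _ + (X + _)]big_ord_recr /= bin_small // mul0r mul0r addr0.
have -> : \sum_(i < n.+1) ('C(n, i))%:R * (-1) ^+ i * (f i - f i.+1) =
  \sum_(i < n.+1) ('C(n, i))%:R * (-1) ^+ i * f i -
  \sum_(i < n.+1) ('C(n, i))%:R * (-1) ^+ i * f i.+1.
  rewrite -sumrB; apply: eq_bigr => i _; by rewrite mulrBr.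
rewrite [in RHS]big_ord_recl /= bin0.
rewrite addrA /bump /=; congr (_ + _).
rewrite -sumrN; apply: eq_bigr => i _; by rewrite exprS mulN1r mulrN mulNr.
Qed.

Lemma alt_pow (n i : nat) (c : R) : (i < n)%N ->
  \sum_(j < n.+1) ('C(n, j))%:R * (-1) ^+ j * (c + j%:R) ^+ i = 0.
Proof.
elim: n i c => [|n IH] i c //.
move=> lti; rewrite (alt_binS n (fun j => (c + j%:R) ^+ i)) /=.
have E : forall j : nat, (c + j%:R) ^+ i - (c + j.+1%:R) ^+ i =
   - \sum_(l < i) (c + j%:R) ^+ l *+ 'C(i, l).
  move=> j; rewrite -natr1 addrA exprD1n big_ord_recr /= binn mulr1n.
  by rewrite opprD addrCA subrr addr0.
under eq_bigr => j _ do rewrite E mulrN mulr_sumr.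
rewrite sumrN exchange_big /= big1 ?oppr0 // => l _.
have H0 := IH l c (leq_trans (ltn_ord l) (lti : (i <= n)%N)).
transitivity ('C(i,l)%:R * \sum_(j < n.+1) 'C(n, j)%:R * (-1) ^+ j * (c + j%:R) ^+ l);
  last by rewrite H0 mulr0.
rewrite mulr_sumr.
apply: eq_bigr => j _.
by rewrite -mulr_natl; ring.
Qed.
Lemma is_derive_cexp (c mu r : R) :
  is_derive r 1 (fun t => c * expR (mu * t)) (c * mu * expR (mu * r)).
Proof.
have h1 : is_derive r 1 (mu \*: id) (mu *: (1:R)) by apply: is_deriveZ; exact: is_derive_id.
have h2 : is_derive r 1 (expR \o (mu \*: id)) (expR ((mu \*: id) r) * (mu *: (1:R))).
  by apply: is_derive1_comp.
have h3 := is_deriveZ c h2.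
apply: is_derive_eq.
  rewrite /= /GRing.scale /=; ring.
Qed.

Lemma expsum_zeros (n : nat) : forall (c lam z : nat -> R),
  (forall i j, (i < n)%N -> (j < n)%N -> i != j -> lam i != lam j) ->
  (forall i, (i.+1 < n)%N -> z i < z i.+1) ->
  (forall i, (i < n)%N -> \sum_(m < n) c m * expR (lam m * z i) = 0) ->
  forall i, (i < n)%N -> c i = 0.
Proof.
elim: n => [|n IH] c lam z hlam hz hF //.
set g := fun r => \sum_(m < n.+1) c m * expR ((lam m - lam 0%N) * r).
have gE r : g r = expR (- (lam 0%N * r)) * \sum_(m < n.+1) c m * expR (lam m * r).
  rewrite /g mulr_sumr; apply: eq_bigr => m _; rewrite mulrCA -expRD.
  by congr (_ * expR _); ring.
have g0 i : (i < n.+1)%N -> g (z i) = 0 by move=> hi; rewrite gE hF // mulr0.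
set dg := fun r => \sum_(m < n) (c m.+1 * (lam m.+1 - lam 0%N)) * expR ((lam m.+1 - lam 0%N) * r).
have gd (r : R) : is_derive r (1:R) g (dg r).
  have -> : g = \sum_(m < n.+1) (fun r => c m * expR ((lam m - lam 0%N) * r)).
    by rewrite fct_sumE.
  apply: is_derive_eq.
  rewrite big_ord_recl /= subrr scale0r mulr0 scaler0 add0r.
  apply: eq_bigr => i _; rewrite /bump /= add1n.
  rewrite /GRing.scale /=; ring.
have hz' : forall i, exists zz, (i.+1 < n.+1)%N -> z i < zz < z i.+1 /\ dg zz = 0.
  move=> i; have [hi|hi] := ltnP i.+1 n.+1; last by exists 0.
  have [zz hzz dz] : exists2 zz, zz \in `]z i, z i.+1[ & is_derive zz 1 g 0.
    apply: Rolle; first exact: hz.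
    - by move=> x _; have [] := gd x.
    - by apply: derivable_within_continuous => x _; have [] := gd x.
    - by rewrite !g0 // ltnW.
  exists zz => _; split; first by rewrite in_itv /= in hzz.
  have := @derive_val _ _ _ _ _ _ _ (gd zz); by rewrite (@derive_val _ _ _ _ _ _ _ dz).
have [zeta hzeta] := choice hz'.
have hc' := IH (fun m => c m.+1 * (lam m.+1 - lam 0%N)) (fun m => lam m.+1 - lam 0%N) zeta.
have H1 : forall i j, (i < n)%N -> (j < n)%N -> i != j ->
    lam i.+1 - lam 0%N != lam j.+1 - lam 0%N.
  move=> i j hi hj hij; apply/negP => /eqP /addIr /eqP; apply/negP; exact: hlam.
have H2 : forall i, (i.+1 < n)%N -> zeta i < zeta i.+1.
  move=> i hi.
  have [/andP [_ h1] _] := hzeta i (ltnW hi).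
  have [/andP [h2 _] _] := hzeta i.+1 hi.
  exact: lt_trans h1 h2.
have H3 := fun i (hi : (i < n)%N) => proj2 (hzeta i hi).
have cS : forall m, (m < n)%N -> c m.+1 = 0.
  move=> m hm.
  have := hc' H1 H2 H3 m hm.
  have hl : lam m.+1 - lam 0%N != 0.
    by rewrite subr_eq0; apply: hlam.
  by move/eqP; rewrite mulf_eq0 (negbTE hl) orbF => /eqP.
have c0 : c 0%N = 0.
  have := hF 0%N isT; rewrite big_ord_recl big1 ?addr0.
    move/eqP; rewrite mulf_eq0 => /orP [/eqP //|]; by rewrite gt_eqF ?expR_gt0.
  by move=> i _; rewrite cS // mul0r.
by case=> [|i] // hi; apply: cS.
Qed.
End Aux.



Section B.
Variable R : realType.

Lemma kceil_prop (p : R) : 0 < p -> ~ (exists n : nat, p = (2 * n)%:R) ->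
  [/\ (0 < kceil p)%N, 2 * (kceil p)%:R - 2 < p & p < 2 * (kceil p)%:R].
Proof.
move=> hp hev.
have c0 : 0 < Num.ceil (p / 2) by rewrite ceil_gt0 divr_gt0.
have kE : (kceil p)%:R = (Num.ceil (p / 2))%:~R :> R.
  by rewrite /kceil natr_absz gtr0_norm.
have [h1 h2] := andP (ceil_itv (p / 2)).
rewrite -kE in h2; rewrite intrD -kE /= in h1.
have kpos : (0 < kceil p)%N.
  by rewrite -(ltr0n R) kE ltr0z.
have h3 : p != 2 * (kceil p)%:R.
  apply/eqP => e; apply: hev; exists (kceil p); by rewrite natrM.
split => //; first by lra.
rewrite lt_neqAle h3 /=; lra.
Qed.


Lemma fconst_sym (k : nat) (r : R) : r != 0 ->
  fdiff_const k r = 2 * \sum_(j < k) ('C(2 * k, j))%:R * (-1) ^+ j * ((k - j)%:R `^ r).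
Proof.
move=> r0.
set F := fun j : nat => ('C(2 * k, j))%:R * (-1) ^+ j * (`|k%:R - j%:R| `^ r) : R.
have Fsym j : (j <= 2 * k)%N -> F (2 * k - j)%N = F j.
  move=> hj; rewrite /F bin_sub // -signr_odd oddB // oddM /= signr_odd.
  by rewrite natrB // natrM -normrN; congr (_ * `|_| `^ _); ring.
rewrite /fdiff_const -/(F _).
have -> : \sum_(j < (2 * k).+1) F j = \sum_(j < (2 * k).+1) F j by [].
rewrite -(big_mkord xpredT F) (@big_cat_nat _ _ _ k 0 (2 * k).+1) /=; [|lia|lia].
rewrite (@big_ltn _ _ _ k); last by lia.
have Fk : F k = 0 by rewrite /F subrr normr0 powR0 // mulr0.
rewrite Fk add0r.
have -> : \sum_(k.+1 <= i < (2 * k).+1) F i = \sum_(0 <= i < k) F i.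
  rewrite -{1}[k.+1]add0n big_addn.
  have -> : ((2 * k).+1 - k.+1 = k)%N by lia.
  rewrite big_nat_rev /=; apply: eq_big_nat => i /andP [_ hi].
  rewrite -Fsym; last by lia.
  congr (F _); lia.
rewrite big_mkord -mulr2n -[LHS]mulr_natl; congr (_ * _).
apply: eq_bigr => i _; rewrite /F; congr (_ * (_ `^ _)).
by rewrite -natrB ?ger0_norm // ltnW.
Qed.


Lemma fconst_even (k i : nat) : (i < k)%N -> (0 < i)%N -> fdiff_const k (2 * i)%:R = 0 :> R.
Proof.
move=> hik hi0.
rewrite /fdiff_const -[RHS](@alt_pow R (2 * k) (2 * i) (- k%:R)); last by lia.
apply: eq_bigr => j _; congr (_ * _).
rewrite powR_mulrn // -normrX ger0_norm; last by rewrite exprM exprn_ge0 // sqr_ge0.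
by rewrite !exprM -sqrrN opprD opprK addrC.
Qed.


Lemma const_ne0 (p : R) : 0 < p -> ~ (exists n : nat, p = (2 * n)%:R) ->
  fdiff_const (kceil p) p != 0.
Proof.
move=> hp hev; have [k0 hlo hhi] := @kceil_prop p hp hev.
move: k0 hlo hhi; set k := kceil p => k0 hlo hhi.
apply/eqP => hc.
pose c := fun m : nat => 2 * (('C(2 * k, m))%:R * (-1) ^+ m) : R.
pose lam := fun m : nat => ln ((k - m)%:R : R).
pose z := fun m : nat => if (m < k.-1)%N then ((2 * m.+1)%:R : R) else p.
have key : forall r : R, r != 0 -> fdiff_const k r = \sum_(m < k) c m * expR (lam m * r).
  move=> r r0; rewrite fconst_sym // mulr_sumr; apply: eq_bigr => m _.
  rewrite /c /lam /powR pnatr_eq0 subn_eq0 leqNgt ltn_ord /= mulrA.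
  by congr (_ * expR _); rewrite mulrC.
suff H0 : c 0%N = 0.
  by move: H0; rewrite /c /= bin0 !mulr1 => /eqP; rewrite pnatr_eq0.
apply: (@expsum_zeros R k c lam z _ _ _ 0%N k0).
- move=> i j hi hj hij; apply/negP => /eqP /ln_inj.
  rewrite !posrE !ltr0n !subn_gt0 => /(_ hi hj) /eqP; rewrite eqr_nat => /eqP.
  move=> e; move/eqP: hij; apply; lia.
- move=> i hi; rewrite /z.
  have h1 : (i < k.-1)%N by lia.
  rewrite h1; case: ifP => h2; first by rewrite ltr_nat; lia.
  have -> : (2 * i.+1)%:R = 2 * k%:R - 2 :> R.
    have e : (2 * i.+1 + 2 = 2 * k)%N by lia.
    apply: (@addIr _ 2); rewrite subrK -[2]/(2%:R) -natrM -natrD e natrM //.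
  exact: hlo.
- move=> i hi; rewrite -key; last first.
    rewrite /z; case: ifP => _; [by rewrite pnatr_eq0 | exact: lt0r_neq0].
  rewrite /z; case: ifP => h; last exact: hc.
  apply: fconst_even; lia.
Qed.

End B.



Section C.
Variable R : realType.

Lemma mvt_abs (f df : R -> R) (u B : R) :
  (forall v, `|v| <= `|u| -> is_derive v (1:R) f (df v)) ->
  (forall v, `|v| <= `|u| -> `|df v| <= B) -> `|f u - f 0| <= B * `|u|.
Proof.
move=> hd hB.
have B0 : 0 <= B by apply: le_trans (hB 0 _); rewrite ?normr0 ?normr_ge0.
have [u0|u0] := leP 0 u.
  have [c hc e] : exists2 c, c \in `[0, u] & f u - f 0 = df c * (u - 0).
    apply: MVT_segment => //.
      by move=> x hx; apply: hd; rewrite in_itv /= in hx; rewrite !ger0_norm; lra.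
    apply: derivable_within_continuous => x hx; rewrite in_itv /= in hx.
    by have [] := hd x ltac:(rewrite !ger0_norm; lra).
  rewrite e subr0 normrM ler_wpM2r // hB //.
  by rewrite in_itv /= in hc; rewrite !ger0_norm; lra.
have [c hc e] : exists2 c, c \in `[u, 0] & f 0 - f u = df c * (0 - u).
  apply: MVT_segment; first lra.
    by move=> x hx; apply: hd; rewrite in_itv /= in hx; rewrite !ler0_norm; lra.
  apply: derivable_within_continuous => x hx; rewrite in_itv /= in hx.
  by have [] := hd x ltac:(rewrite !ler0_norm; lra).
rewrite distrC e sub0r normrM normrN ler_wpM2r // hB //.
by rewrite in_itv /= in hc; rewrite !ler0_norm; lra.
Qed.

Lemma is_derive_powR1 (q v : R) : 0 < 1 + v ->
  is_derive v (1:R) (fun t => (1 + t) `^ q) (q * (1 + v) `^ (q - 1)).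
Proof.
move=> hv.
have h1 : is_derive v (1:R) (fun t : R => 1 + t) 1.
  have := is_deriveD (is_derive_cst (1:R) v 1) (is_derive_id v (1:R)).
  by rewrite add0r.
have h2 := @is_derive1_comp R (fun x : R => x `^ q) (fun t => 1 + t) v _ _ (@is_derive1_powR R q (1 + v) hv) h1.
by rewrite mulr1 in h2.
Qed.

Lemma is_derive_mon (a v : R) (m : nat) :
  is_derive v (1:R) (fun t => a * t ^+ m) (a * (m%:R * v ^+ m.-1)).
Proof.
have -> : (fun t : R => a * t ^+ m) = horner (a *: 'X^m).
  by apply/funext => t; rewrite hornerZ hornerXn.
apply: is_derive_eq.
by rewrite derivZ derivXn hornerZ hornerMn hornerXn mulr_natl.
Qed.


Lemma powR1_bound (q u : R) : `|u| <= 2^-1 ->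
  (1 + u) `^ q <= (2^-1) `^ q + (3/2) `^ q.
Proof.
move=> hu.
have /andP [hu1 hu2] : 2^-1 <= 1 + u <= 3/2 by move: hu; rewrite ler_norml => /andP [? ?]; apply/andP; split; lra.
have A := powR_ge0 (2^-1) q; have B := powR_ge0 (3/2) q.
have [q0|q0] := leP 0 q.
  suff : (1 + u) `^ q <= (3/2) `^ q by lra.
  by apply: ge0_ler_powR => //; rewrite ?nnegrE; lra.
suff : (1 + u) `^ q <= (2^-1) `^ q by lra.
rewrite -[q]opprK powRN [X in _ <= X]powRN.
rewrite lef_pV2 ?posrE ?powR_gt0 //; try lra.
by apply: ge0_ler_powR; rewrite ?nnegrE; lra.
Qed.

Lemma taylor1 (M : nat) : forall q : R, exists c : nat -> R, exists C : R,
  0 <= C /\ forall u : R, `|u| <= 2^-1 ->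
  `|(1 + u) `^ q - \sum_(m < M) c m * u ^+ m| <= C * `|u| ^+ M.
Proof.
elim: M => [|M IH] q.
  exists (fun=> 0), ((2^-1) `^ q + (3/2) `^ q); split.
    by apply: addr_ge0; exact: powR_ge0.
  move=> u hu; rewrite big_ord0 subr0 expr0 mulr1 ger0_norm ?powR_ge0 //.
  exact: powR1_bound.
have [c' [C' [C'0 hC']]] := IH (q - 1).
exists (fun m : nat => if m is m'.+1 then q * c' m' / m'.+1%:R else 1), (`|q| * C').
split; first by rewrite mulr_ge0.
move=> u hu.
pose f := fun v : R => (1 + v) `^ q - \sum_(m < M.+1)
   (if nat_of_ord m is m'.+1 then q * c' m' / m'.+1%:R else 1) * v ^+ m.
pose df := fun v : R => q * ((1 + v) `^ (q - 1) - \sum_(m < M) c' m * v ^+ m).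
have f0 : f 0 = 0.
  rewrite /f addr0 powR1 big_ord_recl /= expr0 mulr1 big1 ?addr0 ?subrr //.
  by move=> i _; rewrite /bump /= add1n expr0n /= mulr0.
have -> : (1 + u) `^ q - \sum_(m < M.+1)
   (if nat_of_ord m is m'.+1 then q * c' m' / m'.+1%:R else 1) * u ^+ m = f u - f 0.
  by rewrite f0 subr0.
rewrite exprSr mulrA.
apply: (@mvt_abs f df u).
  move=> v hv.
  have hv1 : 0 < 1 + v by move: hv; rewrite ler_norml => /andP [? ?]; lra.
  have h1 := is_derive_powR1 q v hv1.
  have h2 := @is_derive_sum _ _ _ M.+1 (fun (m : 'I_M.+1) (t : R) =>
     (if nat_of_ord m is m'.+1 then q * c' m' / m'.+1%:R else 1) * t ^+ m) v 1 _
     (fun m => is_derive_mon _ v m).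
  have h3 := is_deriveB h1 h2.
  have e : forall (g : R -> R) (h : 'I_M.+1 -> R -> R),
      (g - \sum_(i < M.+1) h i) = (fun t => g t - \sum_(i < M.+1) h i t).
    by move=> g h; apply/funext => t; rewrite /= fct_sumE.
  rewrite e in h3.
  apply: is_derive_eq.
  rewrite big_ord_recl /= mul0r mulr0 add0r /df mulrBr; congr (_ - _).
  rewrite mulr_sumr; apply: eq_bigr => i _; rewrite /bump /= add1n.
  by rewrite mulrA divfK ?pnatr_eq0 // mulrA.
move=> v hv.
rewrite /df normrM -mulrA ler_wpM2l //.
apply: le_trans (hC' v _) _; first by apply: le_trans hu.
by rewrite ler_wpM2l // lerXn2r ?normr_ge0.
Qed.

End C.



Section D.
Variable R : realType.

Definition Ssum (k e : nat) : R :=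
  \sum_(j < (2 * k).+1) ('C(2 * k, j))%:R * (-1) ^+ j * (k%:R - j%:R) ^+ e.

Lemma Ssum0 (k e : nat) : (e < 2 * k)%N -> Ssum k e = 0.
Proof.
move=> he.
have := @alt_pow R (2 * k) e (- k%:R) he.
move=> H; rewrite /Ssum.
transitivity (((-1 : R)) ^+ e * \sum_(j < (2 * k).+1) ('C(2 * k, j))%:R * (-1) ^+ j * (- k%:R + j%:R : R) ^+ e);
  last by rewrite H mulr0.
rewrite mulr_sumr.
apply: eq_bigr => j _; rewrite mulrCA; congr (_ * _).
by rewrite -exprMn mulN1r opprD opprK addrC.
Qed.

Lemma expand_quad (t b g : R) (m : nat) :
  (t * b + t ^+ 2 * g) ^+ m =
  \sum_(l < m.+1) (('C(m, l))%:R * b ^+ (m - l) * g ^+ l) * t ^+ (m + l).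
Proof.
have -> : t * b + t ^+ 2 * g = t * (b + t * g) by ring.
rewrite exprMn exprDn mulr_sumr; apply: eq_bigr => l _.
by rewrite exprMn exprD -mulr_natl; ring.
Qed.

Lemma poly_part (k : nat) (c : nat -> R) (L1 L2 : R) :
  0 <= L1 -> 0 <= L2 -> exists K : R, forall b g s : R,
  0 <= s -> s <= 1 -> `|b| <= L1 * s -> `|g| <= L2 * s ^+ 2 ->
  `|\sum_(j < (2 * k).+1) ('C(2 * k, j))%:R * (-1) ^+ j *
     \sum_(m < 2 * k) c m * ((k%:R - j%:R) * b + (k%:R - j%:R) ^+ 2 * g) ^+ m|
  <= K * s ^+ (2 * k).
Proof.
move=> L10 L20.
exists (\sum_(m < 2 * k) \sum_(l < m.+1)
   `|c m| * ('C(m, l))%:R * L1 ^+ (m - l) * L2 ^+ l * `|Ssum k (m + l)|).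
move=> b g s s0 s1 hb hg.
have E : \sum_(j < (2 * k).+1) ('C(2 * k, j))%:R * (-1) ^+ j *
     \sum_(m < 2 * k) c m * ((k%:R - j%:R) * b + (k%:R - j%:R) ^+ 2 * g) ^+ m
  = \sum_(m < 2 * k) \sum_(l < m.+1)
     (c m * (('C(m, l))%:R * b ^+ (m - l) * g ^+ l)) * Ssum k (m + l).
  under eq_bigr => j _.
    rewrite mulr_sumr.
    under eq_bigr => m _.
      rewrite expand_quad mulr_sumr mulr_sumr.
      over.
    over.
  rewrite /= exchange_big /=; apply: eq_bigr => m _.
  rewrite exchange_big /=; apply: eq_bigr => l _.
  rewrite /Ssum mulr_sumr; apply: eq_bigr => j _; ring.
rewrite E mulr_suml; apply: le_trans (ler_norm_sum _ _ _) _.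
apply: ler_sum => m _; rewrite mulr_suml.
apply: le_trans (ler_norm_sum _ _ _) _.
apply: ler_sum => l _.
have [hlt|hge] := ltnP (m + l) (2 * k).
  by rewrite Ssum0 // mulr0 normr0 !mulr0 mul0r.
rewrite !normrM -!mulrA ler_wpM2l //.
rewrite normr_nat ler_wpM2l // !normrX.
have hl : (l <= m)%N by have := ltn_ord l; lia.
have key : `|b| ^+ (m - l) * `|g| ^+ l <= L1 ^+ (m - l) * L2 ^+ l * s ^+ (2 * k).
  apply: le_trans (_ : (L1 * s) ^+ (m - l) * (L2 * s ^+ 2) ^+ l <= _).
    apply: ler_pM; rewrite ?exprn_ge0 ?normr_ge0 //; apply: lerXn2r;
      rewrite ?nnegrE ?normr_ge0 ?mulr_ge0 ?exprn_ge0 //.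
  rewrite !exprMn.
  have -> : L1 ^+ (m - l) * s ^+ (m - l) * (L2 ^+ l * (s ^+ l * s ^+ l)) =
    L1 ^+ (m - l) * L2 ^+ l * s ^+ (m - l + l + l) by rewrite !exprD; ring.
  apply: ler_wpM2l; first by rewrite mulr_ge0 ?exprn_ge0.
  apply: ler_wiXn2l => //; lia.
have -> : `|b| ^+ (m - l) * (`|g| ^+ l * `|Ssum k (m + l)|) =
  (`|b| ^+ (m - l) * `|g| ^+ l) * `|Ssum k (m + l)| by ring.
have -> : L1 ^+ (m - l) * (L2 ^+ l * (`|Ssum k (m + l)| * s ^+ (2 * k))) =
  (L1 ^+ (m - l) * L2 ^+ l * s ^+ (2 * k)) * `|Ssum k (m + l)| by ring.
by apply: ler_wpM2r.
Qed.

End D.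



Section E.
Variable R : realType.
Variable E : normedModType R.
Variable ip : E -> E -> R.
Hypothesis hip : is_inner_product ip.

Lemma ip_expand (x h : E) (t : R) :
  `|x + t *: h| ^+ 2 = `|x| ^+ 2 + 2 * t * ip x h + t ^+ 2 * `|h| ^+ 2.
Proof.
case: hip => sym lin nrm.
have L z : ip (x + t *: h) z = ip x z + t * ip h z.
  by rewrite addrC lin addrC.
rewrite !nrm L sym L [ip h (x + t *: h)]sym L (sym h x); ring.
Qed.


Lemma num_bound (k : nat) (p : R) (x : E) : x != 0 -> (0 < k)%N ->
  exists K d : R, 0 < d /\ forall h : E, `|h| <= d ->
  `|fdiff_num k p x h| <= K * `|h| ^+ (2 * k).
Proof.
move=> x0 k0.
pose a := `|x| ^+ 2.
have a0 : 0 < a by rewrite /a exprn_gt0 // normr_gt0.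
pose q := p / 2.
pose L := k%:R * (2 * `|x| + k%:R) / a.
have L0 : 0 <= L.
  rewrite /L; apply: divr_ge0; last exact: ltW.
  by apply: mulr_ge0 => //; apply: addr_ge0 => //; apply: mulr_ge0.
pose u := fun (t : R) (h : E) => (`|x + t *: h| ^+ 2 - a) / a.
have F1 : forall t h, `|x + t *: h| `^ p = a `^ q * (1 + u t h) `^ q.
  move=> t h.
  have e1 : 1 + u t h = `|x + t *: h| ^+ 2 / a.
    rewrite /u. field. exact: (lt0r_neq0 a0).
  rewrite -powRM; first last.
  - by rewrite e1; apply: divr_ge0; [exact: exprn_ge0|exact: ltW].
  - exact: ltW.
  rewrite e1 mulrC divfK ?(lt0r_neq0 a0) // -powR_mulrn // -powRrM.
  by rewrite /q mulrC divfK.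
have F2 : forall t h, u t h = t * (2 * ip x h / a) + t ^+ 2 * (`|h| ^+ 2 / a).
  by move=> t h; rewrite /u ip_expand /a; field; rewrite normr_eq0.
have F3 : forall t h, `|t| <= k%:R -> `|h| <= 1 -> `|u t h| <= L * `|h|.
  move=> t h ht hh.
  rewrite /u normrM [`|a^-1|]ger0_norm; last by rewrite invr_ge0 ltW.
  rewrite /L [X in _ <= X]mulrAC ler_wpM2r //; first by rewrite invr_ge0 ltW.
  have -> : `|x + t *: h| ^+ 2 - a = (`|x + t *: h| - `|x|) * (`|x + t *: h| + `|x|).
    by rewrite /a; ring.
  have n1 : `| `|x + t *: h| - `|x| | <= `|t| * `|h|.
    by rewrite -normrZ; apply: le_trans (ler_dist_dist _ _) _; rewrite addrC addKr.
  have n2 : `|x + t *: h| <= `|x| + `|t| * `|h|.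
    by rewrite -normrZ; apply: ler_normD.
  rewrite normrM [`|_ + `|x| |]ger0_norm; last by apply: addr_ge0.
  have hh0 := normr_ge0 h; have ht0 := normr_ge0 t.
  have tt : `|t| * `|h| <= k%:R by apply: le_trans (_ : `|t| * 1 <= _); [rewrite ler_wpM2l | rewrite mulr1].
  have : `| `|x + t *: h| - `|x| | <= k%:R * `|h|.
    by apply: le_trans n1 _; rewrite ler_wpM2r.
  move=> n3.
  have n4 : `|x + t *: h| + `|x| <= 2 * `|x| + k%:R by lra.
  have := ler_pM (normr_ge0 _) (addr_ge0 (normr_ge0 _) (normr_ge0 _)) n3 n4.
  by move=> H; apply: le_trans H _; rewrite mulrAC.
have [c [C [C0 hC]]] := @taylor1 R (2 * k)%N q.
pose L1 := L + a^-1.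
pose L2 := a^-1.
have L20 : 0 <= L2 by rewrite /L2 invr_ge0 ltW.
have L10 : 0 <= L1 by rewrite /L1 addr_ge0.
have [K0 hK0] := @poly_part R k c L1 L2 L10 L20.
pose W := \sum_(j < (2 * k).+1) `|('C(2 * k, j))%:R * (-1) ^+ j : R|.
exists (a `^ q * (W * C * L ^+ (2 * k) + K0)), (2 * (L + 1))^-1.
split; first by rewrite invr_gt0 mulr_gt0 // ltr_wpDl.
move=> h hd.
set s := `|h|.
have s0 : 0 <= s := normr_ge0 h.
have dle : (2 * (L + 1))^-1 <= 2^-1.
  rewrite lef_pV2 ?posrE ?mulr_gt0 ?ltr_wpDl //; lra.
have s1 : s <= 1 by apply: le_trans hd _; apply: le_trans dle _; lra.
have Ls : L * s <= 2^-1.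
  have : L * s <= L * (2 * (L + 1))^-1 by rewrite ler_wpM2l.
  have -> : L * (2 * (L + 1))^-1 = 2^-1 - 2^-1 / (L + 1).
    by field; apply: lt0r_neq0; lra.
  have : 0 <= 2^-1 / (L + 1) by rewrite divr_ge0 //; lra.
  lra.
pose b := 2 * ip x h / a.
pose g := s ^+ 2 / a.
have hg : `|g| <= L2 * s ^+ 2.
  rewrite /g ger0_norm; first by rewrite mulrC. 
  by apply: divr_ge0; [exact: exprn_ge0|exact: ltW].
have hb : `|b| <= L1 * s.
  have e : b = u 1 h - g by rewrite F2 /b /g expr1n !mul1r addrK.
  have h1 : `|u 1 h| <= L * s by apply: F3 => //; rewrite normr1 ler1n.
  have h2 : `|g| <= a^-1 * s.
    apply: le_trans hg _; rewrite /L2; apply: ler_wpM2l; first by rewrite invr_ge0 ltW.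
    rewrite expr2 -[X in _ <= X]mulr1; exact: ler_wpM2l.
  rewrite e /L1 mulrDl; apply: le_trans (ler_normB _ _) _; lra.
have tj : forall j : 'I_(2 * k).+1, `|k%:R - (j : nat)%:R| <= k%:R :> R.
  move=> j; rewrite ler_norml; have := ltn_ord j => hj.
  have : (j : nat)%:R <= (2 * k)%:R :> R by rewrite ler_nat -ltnS.
  rewrite natrM; have := ler0n R j; lra.
have hu : forall j : 'I_(2 * k).+1, `|u (k%:R - (j : nat)%:R) h| <= L * s.
  by move=> j; apply: F3.
rewrite /fdiff_num.
under eq_bigr => j _ do rewrite F1 mulrCA.
rewrite -mulr_sumr normrM ger0_norm ?powR_ge0 // -mulrA; apply: ler_wpM2l; first exact: powR_ge0.
pose P := fun v : R => \sum_(m < 2 * k) c m * v ^+ m.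
have -> : \sum_(j < (2 * k).+1) ('C(2 * k, j))%:R * (-1) ^+ j *
    (1 + u (k%:R - j%:R) h) `^ q =
  \sum_(j < (2 * k).+1) ('C(2 * k, j))%:R * (-1) ^+ j *
    ((1 + u (k%:R - j%:R) h) `^ q - P (u (k%:R - j%:R) h)) +
  \sum_(j < (2 * k).+1) ('C(2 * k, j))%:R * (-1) ^+ j * P (u (k%:R - j%:R) h).
  by rewrite -big_split /=; apply: eq_bigr => j _; rewrite -mulrDr subrK.
rewrite mulrDl; apply: le_trans (ler_normD _ _) _; apply: lerD.
  apply: le_trans (ler_norm_sum _ _ _) _.
  rewrite /W !mulr_suml; apply: ler_sum => j _.
  rewrite normrM -!mulrA ler_wpM2l //.
  apply: le_trans (hC _ _) _; first by apply: le_trans (hu j) _.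
  rewrite -exprMn; apply: ler_wpM2l => //.
  by apply: lerXn2r; rewrite ?nnegrE ?normr_ge0 ?mulr_ge0.
have := hK0 b g s s0 s1 hb hg.
apply: le_trans; rewrite le_eqVlt; apply/orP; left; apply/eqP.
congr `|_|; apply: eq_bigr => j _; congr (_ * _); rewrite /P.
by apply: eq_bigr => m _; rewrite F2.
Qed.

End E.



Theorem lemma3p9 (R : realType) (E : completeNormedModType R)
  (hE : hilbert_space E) (sE : separable_space E)
  (p : R) (hp : 0 < p) (hpev : ~ (exists n : nat, p = (2 * n)%:R))
  (x : E) :
  (fun h : E => fdiff_num (kceil p) p x h
                / (fdiff_const (kceil p) p * `|h| `^ p))
    @ (0 : E)^' --> (if x == 0 then 1 else 0 : R).
Proof.
have [k0 hlo hhi] := @kceil_prop R p hp hpev.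
have cne := @const_ne0 R p hp hpev.
move: k0 hlo hhi cne; set k := kceil p => k0 hlo hhi cne.
have [ip hip] := hE.
case: eqP => [->|/eqP x0].
  apply/cvgrPdist_lt => e e0.
  near=> h.
  have hne : h != 0 by near: h; exact: nbhs_dnbhs_neq.
  suff -> : fdiff_num k p 0 h = fdiff_const k p * `|h| `^ p.
    rewrite divff ?subrr ?normr0 // mulf_neq0 //.
    by rewrite powR_eq0 normr_eq0 (negbTE hne).
  rewrite /fdiff_num /fdiff_const mulr_suml; apply: eq_bigr => j _.
  by rewrite add0r normrZ powRM // mulrA.
have [K [d [d0 hK]]] := @num_bound R E ip hip k p x x0 k0.
pose c := fdiff_const k p.
pose K' := `|K| * `|c|^-1.
pose r := 2 * k%:R - p.
have r0 : 0 < r by rewrite /r; lra.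
apply/cvgr0Pnorm_lt => e e0.
have eps0 : 0 < e / (K' + 1).
  by rewrite divr_gt0 // ltr_wpDl // mulr_ge0 // invr_ge0.
have := @powR_cvg0 R r r0.
move/cvgr0Pnorm_lt => /(_ _ eps0) H.
have [eta eta0 Heta] : exists2 eta : R, 0 < eta &
    forall a : R, `|a| < eta -> 0 < a -> `|a `^ r| < e / (K' + 1).
  by move: H => /nbhs_norm0P [eta /= eta0 Heta]; exists eta => // a ha a0; apply: Heta.
near=> h.
have hne : h != 0 by near: h; exact: nbhs_dnbhs_neq.
have hsm : `|h| < Num.min eta d by near: h; apply: dnbhs0_lt; rewrite lt_min eta0.
have s0 : 0 < `|h| by rewrite normr_gt0.
have hsd : `|h| <= d by apply: ltW; apply: lt_le_trans hsm _; rewrite ge_min lexx orbT.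
have hse : `|h| < eta by apply: lt_le_trans hsm _; rewrite ge_min lexx.
have hN := hK h hsd.
have hr := Heta `|h| ltac:(by rewrite normr_id) s0.
rewrite ger0_norm ?powR_ge0 // in hr.
have pr : `|h| ^+ (2 * k) / `|h| `^ p = `|h| `^ r.
  rewrite /r powRB; last by rewrite normr_eq0 hne implybT.
  by rewrite -[2]/(2%:R) -natrM powR_mulrn.
have P0 : 0 < `|h| `^ p := powR_gt0 _ s0.
have K'0 : 0 <= K' by rewrite /K' mulr_ge0 // invr_ge0.
rewrite normf_div normrM (ger0_norm (ltW P0)).
apply: (@le_lt_trans _ _ (K' * `|h| `^ r)).
  rewrite -pr /K' invfM.
  have hN' : `|fdiff_num k p x h| <= `|K| * `|h| ^+ (2 * k).
    apply: le_trans hN _; apply: ler_wpM2r; first exact: exprn_ge0.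
    exact: ler_norm.
  have X0 : 0 <= `|c|^-1 * (`|h| `^ p)^-1 by rewrite mulr_ge0 // invr_ge0 ltW.
  have := ler_wpM2r X0 hN'.
  by rewrite /c; move=> H1; apply: le_trans H1 _; rewrite le_eqVlt; apply/orP; left; apply/eqP; ring.
apply: (@le_lt_trans _ _ ((K' + 1) * `|h| `^ r)).
  by rewrite ler_wpM2r ?powR_ge0 // lerDl.
have -> : e = (K' + 1) * (e / (K' + 1)) by field; apply: lt0r_neq0; rewrite ltr_wpDl.
rewrite ltr_pM2l //; rewrite ltr_wpDl //.
Unshelve. all: end_near.
Qed.
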